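(* For all integers $n\ge1$, $k\ge0$, every sequence $\boldsymbol a$ of positive reals and all $t$, \[ \theta_{n;k}(t)=\sum_{j=0}^{k} t^j\,\theta_{n;j}(1)\,(1-t)^{k-j}\,\theta_{n;k-j}(0), \] where $\theta_{n;j}(1)=h_j(a_1,\dots,a_n)$ is the complete homogeneous symmetric polynomial and $\theta_{n;j}(0)=e_j(a_1,\dots,a_n)$ is the elementary symmetric polynomial.
   Context: Let $\boldsymbol a=(a_j)_{j\ge1}$ be a sequence of positive reals. For integers $n\ge1$, $k\ge0$ let $\mathcal M_{n,k}=\{(\ell_1,\dots,\ell_k)\in\mathbb N^k: n\ge\ell_1\ge\cdots\ge\ell_k\ge1\}$. For $\vec\ell\in\mathcal M_{n,k}$ let $\sigma(\vec\ell)=|\{1\le j\le k-1:\ell_j=\ell_{j+1}\}|$ and $w(\vec\ell)=\prod_{j=1}^k a_{\ell_j}$. Define $\theta_{n;k}(t)=\sum_{\vec\ell\in\mathcal M_{n,k}}w(\vec\ell)\,t^{\sigma(\vec\ell)}$, with $\theta_{n;0}(t)=1$. *)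

(* Defs.v *)
From HB Require Import structures.
From mathcomp Require Import all_boot all_order all_algebra.
Set Implicit Arguments. Unset Strict Implicit. Unset Printing Implicit Defensive.
Import Order.TTheory GRing.Theory Num.Theory.
Local Open Scope ring_scope.

Definition sigma (s : seq nat) : nat :=
  match s with
  | [::] => 0%N
  | x :: s' => count id (pairmap (fun u v => u == v) x s')
  end.

Definition inM (n k : nat) (l : k.-tuple 'I_n.+1) : bool :=
  sorted (fun x y => (y <= x)%N) (map val l) && all (fun x => (0 < x)%N) (map val l).

Definition theta_nk (R : comNzRingType) (a : nat -> R) (n k : nat) (t : R) : R :=
  \sum_(l : k.-tuple 'I_n.+1 | inM l)
     (\prod_(x <- l) a (val x)) * t ^+ sigma (map val l).

(* complete homogeneous symmetric polynomial h_j(a_1,...,a_n):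
   sum over multisets of size j of {1..n}, encoded as nondecreasing j-tuples *)
Definition hom_sym (R : comNzRingType) (a : nat -> R) (n j : nat) : R :=
  \sum_(m : j.-tuple 'I_n | sorted leq (map val m)) \prod_(i <- m) a (val i).+1.

Definition elem_sym (R : comNzRingType) (a : nat -> R) (n j : nat) : R :=
  \sum_(S : {set 'I_n} | #|S| == j) \prod_(i in S) a (val i).+1.

(* Main.v *)
Require Import Defs.
From HB Require Import structures.
From mathcomp Require Import all_boot all_order all_algebra.
From mathcomp Require Import ring.
Import Order.TTheory GRing.Theory Num.Theory.
Set Implicit Arguments. Unset Strict Implicit.
Local Open Scope ring_scope.

Fixpoint decs (k b : nat) : seq (seq nat) :=
  match k with
  | 0 => [:: [::]]
  | k'.+1 => [seq x :: s | x <- iota 1 b, s <- decs k' x]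
  end.

Definition W (R : comNzRingType) (a : nat -> R) (t : R) (s : seq nat) : R :=
  (\prod_(x <- s) a x) * t ^+ sigma s.

Definition D (R : comNzRingType) (a : nat -> R) (t : R) (k b : nat) : R :=
  \sum_(s <- decs k b) W a t s.

Lemma W_cons2 (R : comNzRingType) (a : nat -> R) t y z s :
  W a t [:: y, z & s] = a y * t ^+ (y == z) * W a t (z :: s).
Proof.
rewrite /W /sigma /= !big_cons exprD; ring.
Qed.

Lemma W_cons1 (R : comNzRingType) (a : nat -> R) t y :
  W a t [:: y] = a y.
Proof. by rewrite /W /sigma /= big_cons big_nil mulr1 expr0 mulr1. Qed.

Lemma D0b (R : comNzRingType) (a : nat -> R) t b : D a t 0 b = 1.
Proof. by rewrite /D /= big_cons big_nil /W big_nil /sigma expr0 !mulr1 addr0. Qed.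

Lemma DS0 (R : comNzRingType) (a : nat -> R) t k : D a t k.+1 0 = 0.
Proof. by rewrite /D /= big_nil. Qed.

Lemma decsSS k b : decs k.+1 b.+1 = decs k.+1 b ++ [seq b.+1 :: s | s <- decs k b.+1].
Proof.
have -> : decs k.+1 b.+1 = [seq x :: s | x <- iota 1 (b + 1), s <- decs k x] by rewrite addn1.
by rewrite iotaD allpairs_cat /= cats0 add1n.
Qed.

Lemma DSS_split (R : comNzRingType) (a : nat -> R) t k b :
  D a t k.+1 b.+1 = D a t k.+1 b + \sum_(s <- decs k b.+1) W a t (b.+1 :: s).
Proof. by rewrite /D decsSS big_cat big_map. Qed.

Lemma DS_flat (R : comNzRingType) (a : nat -> R) t k b :
  D a t k.+1 b = \sum_(x <- iota 1 b) \sum_(s <- decs k x) W a t (x :: s).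
Proof. by rewrite /D /= big_flatten /= big_map; apply: eq_bigr => x _; rewrite big_map. Qed.

Lemma Drec (R : comNzRingType) (a : nat -> R) t k b :
  D a t k.+1 b.+1 = D a t k.+1 b + a b.+1 * (1 - t) * D a t k b + a b.+1 * t * D a t k b.+1.
Proof.
rewrite DSS_split; case: k => [|k].
  rewrite /= big_cons big_nil W_cons1 !D0b; ring.
rewrite decsSS big_cat big_map /=.
have -> : \sum_(s <- decs k.+1 b) W a t [:: b.+1 & s] = a b.+1 * D a t k.+1 b.
  rewrite DS_flat big_distrr /= big_flatten /= big_map.
  rewrite big_seq [RHS]big_seq; apply: eq_bigr => x; rewrite mem_iota => /andP[_ xb].
  rewrite big_map big_distrr /=; apply: eq_bigr => s _.
  rewrite W_cons2; have -> : (b.+1 == x) = false by apply/negbTE; rewrite neq_ltn -addn1 xb orbT.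
  by rewrite expr0 mulr1.
under eq_bigr do rewrite W_cons2 eqxx expr1.
rewrite -big_distrr /= DSS_split; ring.
Qed.
Local Close Scope ring_scope.

Definition pos_le (b : nat) := fun x => (0 < x <= b)%N.

Lemma mem_decs k b s :
  (s \in decs k b) = [&& size s == k, sorted (fun x y => (y <= x)%N) s & all (pos_le b) s].
Proof.
elim: k b s => [|k IH] b s.
  by case: s.
case: s => [|y s].
  by apply/allpairsPdep => -[x [z [_ _]]].
apply/idP/idP.
  move/allpairsPdep=> [x [z [xi zd [-> ->]]]]; move: zd; rewrite IH => /and3P[sz so sa].
  move: xi; rewrite mem_iota => /andP[x1 xb].
  rewrite /= eqSS sz /= path_sortedE; last by move=> u v w h1 h2; apply: leq_trans h2 h1.
  rewrite so andbT /pos_le x1 /= -ltnS (leq_trans xb) //=.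
  apply/andP; split; apply/allP => u us; have := allP sa u us; rewrite /pos_le => /andP[u0 ux] //.
  by rewrite u0 (leq_trans ux) // -ltnS (leq_trans xb).
move=> /and3P[sz so sa]; apply/allpairsPdep; exists y, s; split => //.
  by move: sa => /= /andP[/andP[y0 yb] _]; rewrite mem_iota y0 add1n ltnS.
move: so; rewrite /= path_sortedE; last by move=> u v w h1 h2; apply: leq_trans h2 h1.
move=> /andP[sa' so]; change (s \in decs k y); rewrite IH -(eqSS (size s)) sz so /=.
apply/allP => u us; move: (allP sa' u us) => uy; move: sa => /= /andP[_ /allP sa].
by have := sa u us; rewrite /pos_le => /andP[-> _].
Qed.

Lemma uniq_decs k b : uniq (decs k b).
Proof.
elim: k b => [|k IH] b //=.
apply: allpairs_uniq_dep; first exact: iota_uniq.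
  by move=> x _; apply: IH.
move=> [x1 s1] [x2 s2] _ _ /= [-> ->] //.
Qed.

Definition TT M k := map (fun l : k.-tuple 'I_M.+1 => map val l) (enum {: k.-tuple 'I_M.+1}).

Lemma big_TT (R : comNzRingType) M k (P : pred (seq nat)) (F : seq nat -> R) :
  (\sum_(l : k.-tuple 'I_M.+1 | P (map val l)) F (map val l) = \sum_(s <- TT M k | P s) F s)%R.
Proof.
by rewrite /TT big_map big_enum_cond /=.
Qed.

Lemma uniq_TT M k : uniq (TT M k).
Proof.
rewrite /TT map_inj_uniq ?enum_uniq // => l1 l2 /= h.
by apply: val_inj; apply: (inj_map val_inj).
Qed.

Lemma mem_TT M k s : (s \in TT M k) = (size s == k) && all (fun x => x < M.+1) s.
Proof.
apply/mapP/idP.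
  move=> [l _ ->]; rewrite size_map size_tuple eqxx /=.
  by apply/allP => x /mapP[y _ ->].
move=> /andP[/eqP sz sa].
have sz' : size (map (@inord M) s) == k by rewrite size_map sz.
exists (Tuple sz'); first by rewrite mem_enum.
rewrite /= -map_comp map_id_in // => x xs /=; rewrite inordK //.
exact: (allP sa).
Qed.

Lemma theta_D (R : comNzRingType) (a : nat -> R) n k t :
  theta_nk a n k t = D a t k n.
Proof.
rewrite /theta_nk /inM.
under eq_bigr => l _ do rewrite -(big_map val xpredT a).
rewrite (big_TT _ _ (fun s => sorted (fun x y => (y <= x)%N) s && all (fun x => (0 < x)%N) s)
                (fun s => (\prod_(x <- s) a x) * t ^+ sigma s)%R).
rewrite -big_filter /D /W; apply: perm_big.
apply: uniq_perm; first by rewrite filter_uniq // uniq_TT.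
  exact: uniq_decs.
move=> s; rewrite mem_filter mem_TT mem_decs.
rewrite andbC -andbA; congr (_ && _).
rewrite [in LHS]andbC -andbA; congr (_ && _).
rewrite -all_predI; apply: eq_all => x /=; rewrite /pos_le ltnS andbC //.
Qed.

Lemma succ_pred_map s : all (fun x => 0 < x)%N s -> map succn (map predn s) = s.
Proof.
move=> sa; rewrite -map_comp map_id_in // => x xs /=; rewrite prednK //; exact: (allP sa).
Qed.

Lemma hom_D (R : comNzRingType) (a : nat -> R) n k :
  hom_sym a n.+1 k = D a 1 k n.+1.
Proof.
rewrite /hom_sym.
under eq_bigr => l _ do rewrite -(big_map val xpredT (fun x => a x.+1)).
rewrite (big_TT _ _ (fun s => sorted leq s) (fun s => \prod_(x <- s) a x.+1)%R).
rewrite -big_filter.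
pose g (s : seq nat) := rev (map predn s).
have posd s : s \in decs k n.+1 -> all (fun x => 0 < x)%N s.
  rewrite mem_decs => /and3P[_ _ sa]; apply/allP => x xs.
  by have := allP sa x xs; rewrite /pos_le => /andP[].
rewrite (perm_big (map g (decs k n.+1))).
  rewrite big_map /D /W; apply: eq_big_seq => s sd.
  rewrite expr1n mulr1 /g big_rev big_map; apply: eq_big_seq => x xs.
  by rewrite prednK // (allP (posd s sd)).
apply: uniq_perm; first by rewrite filter_uniq // uniq_TT.
  rewrite map_inj_in_uniq ?uniq_decs // => s1 s2 h1 h2 /= /(can_inj revK) e.
  by rewrite -(succ_pred_map (posd _ h1)) e succ_pred_map // posd.
move=> s; rewrite mem_filter mem_TT; apply/idP/idP.
  move=> /andP[so /andP[/eqP sz sa]].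
  apply/mapP; exists (rev (map succn s)).
    rewrite mem_decs size_rev size_map sz eqxx /= rev_sorted.
    rewrite all_rev all_map; apply/andP; split.
      by rewrite sorted_map; apply: sub_sorted so.
    by apply/allP => x xs /=; rewrite /pos_le /=; exact: (allP sa).
  by rewrite /g map_rev revK -map_comp map_id.
move=> /mapP[s' s'd ->]; move: (s'd); rewrite mem_decs => /and3P[/eqP sz so sa].
rewrite /g size_rev size_map sz eqxx /= all_rev all_map rev_sorted.
apply/andP; split.
  rewrite sorted_map; apply: sub_sorted so => x y /= h; by rewrite -!subn1 leq_sub2r.
by apply/allP => x xs; have := allP sa x xs; rewrite /pos_le /=; case: x {xs}.
Qed.

Lemma sorted_gt_sigma s :
  sorted (fun x y => (y <= x)%N) s && (sigma s == 0%N) = sorted (fun x y => (y < x)%N) s.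
Proof.
elim: s => [|x s IH] //; case: s IH => [|y r] IH //=.
move: IH; rewrite /sigma /= => <-.
rewrite addn_eq0 ltn_neqAle [y == x]eq_sym; case: (x == y) => /=; first by rewrite andbF.
by rewrite andbA.
Qed.

Lemma elem_D (R : comNzRingType) (a : nat -> R) n k :
  elem_sym a n k = D a 0 k n.
Proof.
pose sv := fun i : 'I_n => (val i).+1.
pose g (S : {set 'I_n}) := rev (sort leq (map sv (enum S))).
have memg S x : (x \in g S) = (x \in map sv (enum S)) by rewrite mem_rev mem_sort.
have memg2 S (i : 'I_n) : (sv i \in g S) = (i \in S).
  by rewrite memg mem_map ?mem_enum // => u v [] /val_inj.
have sizeg S : size (g S) = #|S| by rewrite size_rev size_sort size_map cardE.
rewrite /elem_sym.
have -> : (\sum_(S : {set 'I_n} | #|S| == k) \prod_(i in S) a (val i).+1 =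
           \sum_(S : {set 'I_n} | #|S| == k) \prod_(x <- g S) a x)%R.
  apply: eq_bigr => S _; rewrite big_rev -big_enum.
  have /permPl p := perm_sort leq (map sv (enum S)).
  by rewrite (perm_big _ p) big_map.
rewrite -[LHS](big_enum_cond _ _ {: {set 'I_n}}) /= -big_filter -(big_map g xpredT (fun s => \prod_(x <- s) a x)%R).
rewrite /D /W.
have -> : (\sum_(s <- decs k n) (\prod_(x <- s) a x) * 0 ^+ sigma s =
           \sum_(s <- decs k n | sigma s == 0%N) \prod_(x <- s) a x)%R.
  rewrite [RHS]big_mkcond /=; apply: eq_bigr => s _; rewrite expr0n.
  by case: (sigma s == 0%N); rewrite ?mulr1 ?mulr0.
rewrite -[RHS]big_filter; apply: perm_big.
apply: uniq_perm.
- rewrite map_inj_in_uniq ?filter_uniq ?enum_uniq ?index_enum_uniq // => S1 S2 _ _ e.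
  by apply/setP => i; rewrite -!memg2 e.
- by rewrite filter_uniq // uniq_decs.
move=> s; rewrite mem_filter mem_decs; apply/mapP/idP.
  move=> [S]; rewrite mem_filter => /andP[/eqP cS _] ->.
  have sg : sorted (fun x y => (y < x)%N) (g S).
    rewrite rev_sorted ltn_sorted_uniq_leq sort_uniq (sort_sorted leq_total) andbT.
    by rewrite map_inj_uniq ?enum_uniq // => u v [] /val_inj.
  move: (sg); rewrite -sorted_gt_sigma => /andP[sge ->].
  rewrite sizeg cS eqxx sge /=.
  apply/allP => x; rewrite memg => /mapP[i _ ->]; rewrite /pos_le /sv /=.
  exact: ltn_ord.
move=> /andP[sig0 /and3P[/eqP sz so sa]].
have gS : g [set i : 'I_n | sv i \in s] = s.
  apply: (can_inj revK); rewrite /g revK.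
  apply: (@irr_sorted_eq _ ltn ltn_trans ltnn).
  - rewrite ltn_sorted_uniq_leq sort_uniq (sort_sorted leq_total) andbT.
    by rewrite map_inj_uniq ?enum_uniq // => u v [] /val_inj.
  - by rewrite rev_sorted -sorted_gt_sigma so sig0.
  move=> x; rewrite mem_sort mem_rev; apply/mapP/idP.
    by move=> [i]; rewrite mem_enum inE => xi ->.
  move=> xs; have := allP sa x xs; rewrite /pos_le => /andP[x0 xn].
  have xn' : (x.-1 < n)%N by rewrite -ltnS prednK.
  exists (Ordinal xn'); last by rewrite /sv /= prednK.
  by rewrite mem_enum inE /sv /= prednK.
exists [set i : 'I_n | sv i \in s] => //.
by rewrite mem_filter -sizeg gS sz /= eqnE eqxx mem_enum.
Qed.
Local Open Scope ring_scope.

Definition eqN (R : comNzRingType) N (p q : {poly R}) := forall i, (i < N)%N -> p`_i = q`_i.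

Lemma eqN_trans (R : comNzRingType) N (p q r : {poly R}) : eqN N p q -> eqN N q r -> eqN N p r.
Proof. by move=> h1 h2 i hi; rewrite h1 // h2. Qed.

Lemma eqN_sym (R : comNzRingType) N (p q : {poly R}) : eqN N p q -> eqN N q p.
Proof. by move=> h i hi; rewrite h. Qed.

Lemma eqN_mulr (R : comNzRingType) N (p q r : {poly R}) : eqN N p q -> eqN N (p * r) (q * r).
Proof.
move=> h i hi; rewrite !coefM; apply: eq_bigr => j _; rewrite h //.
by apply: leq_ltn_trans hi; rewrite -ltnS.
Qed.

Lemma eqN_mull (R : comNzRingType) N (p q r : {poly R}) : eqN N p q -> eqN N (r * p) (r * q).
Proof. by move=> h; rewrite ![r * _]mulrC; apply: eqN_mulr. Qed.

Lemma coef_lin (R : comNzRingType) (p : {poly R}) c i :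
  (p * (1 + c%:P * 'X))`_i = p`_i + (if i is i'.+1 then c * p`_i' else 0).
Proof.
rewrite mulrDr mulr1 coefD mulrA coefMX coefMC; case: i => [|i] /=; first by [].
by rewrite mulrC.
Qed.

Lemma eqN_cancel (R : comNzRingType) N (p q : {poly R}) c :
  eqN N (p * (1 + c%:P * 'X)) (q * (1 + c%:P * 'X)) -> eqN N p q.
Proof.
move=> h i; elim: i => [|i IH] hi.
  by have := h 0%N hi; rewrite !coef_lin !addr0.
have := h i.+1 hi; rewrite !coef_lin IH ?(ltnW hi) //.
by move/addIr.
Qed.

Definition ser (R : comNzRingType) N (f : nat -> R) : {poly R} := \poly_(i < N) f i.

Lemma Dident (R : comNzRingType) (a : nat -> R) t k b :
  D a t k b = \sum_(j < k.+1) t ^+ j * D a 1 j b * (1 - t) ^+ (k - j) * D a 0 (k - j) b.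
Proof.
pose N := k.+1.
pose Hs b := ser N (fun j => t ^+ j * D a 1 j b).
pose Es b := ser N (fun j => (1 - t) ^+ j * D a 0 j b).
pose Ds b := ser N (fun j => D a t j b).
suff main : eqN N (Ds b) (Hs b * Es b).
  have := main k (ltnSn k); rewrite coef_poly ltnSn => ->.
  rewrite coefM; apply: eq_bigr => j _.
  rewrite !coef_poly (leq_ltn_trans (leq_subr _ _) (ltnSn k)).
  have -> : (j < N)%N by apply: (ltn_ord j).
  ring.
elim: b => [|b IH].
  move=> i hi; rewrite coefM coef_poly hi.
  case: i hi => [|i] hi.
    rewrite big_ord1 !coef_poly /= !D0b; ring.
  rewrite DS0 big1 // => j _; rewrite !coef_poly.
  case: (nat_of_ord j) => [|j'].
    rewrite subn0 DS0; case: ifP => _; ring.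
  rewrite DS0; case: ifP => _; ring.
set c := a b.+1 * t.
set d := a b.+1 * (1 - t).
have F1 : eqN N (Hs b.+1 * (1 + (- c)%:P * 'X)) (Hs b).
  move=> i hi; rewrite /Hs /Es /Ds /ser coef_lin !coef_poly hi.
  case: i hi => [|i] hi; first by rewrite addr0 !D0b.
  rewrite coef_poly (ltnW hi) Drec /c !exprS; ring.
have F2 : eqN N (Es b.+1) (Es b * (1 + d%:P * 'X)).
  move=> i hi; rewrite /Hs /Es /Ds /ser coef_lin !coef_poly hi.
  case: i hi => [|i] hi; first by rewrite addr0 !D0b.
  rewrite ?coef_poly (ltnW hi) Drec /d !exprS; ring.
have F3 : eqN N (Ds b.+1 * (1 + (- c)%:P * 'X)) (Ds b * (1 + d%:P * 'X)).
  move=> i hi; rewrite /Hs /Es /Ds /ser !coef_lin !coef_poly hi.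
  case: i hi => [|i] hi; first by rewrite !addr0 !D0b.
  rewrite ?coef_poly (ltnW hi) Drec /c /d; ring.
apply: (@eqN_cancel _ _ _ _ (- c)).
apply: eqN_sym; apply: (eqN_trans (q := Hs b * Es b.+1)).
  by rewrite mulrAC; apply: eqN_mulr.
apply: (eqN_trans (q := Hs b * Es b * (1 + d%:P * 'X))).
  by rewrite -mulrA; apply: eqN_mull.
apply: (eqN_trans (q := Ds b * (1 + d%:P * 'X))).
  by apply: eqN_mulr; apply: eqN_sym.
by apply: eqN_sym.
Qed.

Theorem mainTheorem2 (R : realFieldType) (a : nat -> R)
  (apos : forall j : nat, (1 <= j)%N -> 0 < a j) (n k : nat) (t : R) :
  (1 <= n)%N ->
  theta_nk a n k t =
    \sum_(j < k.+1)
       t ^+ j * theta_nk a n j 1 * (1 - t) ^+ (k - j) * theta_nk a n (k - j) 0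
  /\ (forall j : nat, theta_nk a n j 1 = hom_sym a n j)
  /\ (forall j : nat, theta_nk a n j 0 = elem_sym a n j).
Proof.
case: n => [//|n] _.
split; last split.
- rewrite theta_D Dident; apply: eq_bigr => j _; by rewrite !theta_D.
- by move=> j; rewrite theta_D hom_D.
- by move=> j; rewrite theta_D elem_D.
Qed.
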